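(* Let $(P_n)_{n\ge0}$ be monic polynomials with $\deg P_n=n$, $P_n(x)=\sum_{i=0}^nb_{n,i}x^i$, let $(\gamma_n)_{n\ge1}$ be nonzero complex numbers, and let $P_0^{(1)}=P_0$, $P_n^{(1)}=P_n+\gamma_nP_{n-1}$ ($n\ge1$), with coefficients $P_n^{(1)}(x)=\sum_{i=0}^nb^{(1)}_{n,i}x^i$. (In the paper's setting the $P_n$ are the eigenpolynomials of a differential operator as in the standing assumptions below.) For a family $(Q_m)$ of monic polynomials, $\deg Q_m=m$, with coefficients $q_{m,l}$, and integers $n\ge1$, $1\le k\le n$, $s\ge1$, let $\Delta_{k,n,s}(Q)$ be the determinant of the $k\times k$ matrix with first row entries $\left[\binom{n-k}{s-1}+\cdots+\binom{n-k+c-1}{s-1}\right]q_{n-k+c,\,n-k}$ ($1\le c\le k$) and, for $2\le\rho\le k$, entries $q_{n-k+c,\;n-k+\rho-1}$. Write $\Delta_{k,n,s}=\Delta_{k,n,s}(P)$ and $\Delta^{(1)}_{k,n,s}=\Delta_{k,n,s}(P^{(1)})$. Then $$\Delta^{(1)}_{k,n,s}=\Delta_{k,n,s}+\sum_{j=0}^{k-1}(-1)^j\binom{n-k+j}{s-1}b_{n-k+j,\,n-k}\left[\sum_{r=1}^{k-j}\gamma_{n-k+j+1}\cdots\gamma_{n-k+j+r}\,E_{k,n,j+r-1}\right],$$ where for $0\le t\le k-1$, $E_{k,n,t}$ is the determinant of the $(k-t-1)\times(k-t-1)$ matrix with $(\rho,c)$ entry $b_{n-k+t+1+c,\;n-k+t+\rho}$,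 and $E_{k,n,k-1}=1$.
   Context: Conventions: $q_{m,m}=1$, $q_{m,l}=0$ for $l>m$ (likewise for $b$, $b^{(1)}$); $\binom{m}{s-1}=0$ for $m<s-1$. Standing assumptions of the paper: $(P_n)$ are monic eigenpolynomials of $L=\sum_{i=0}^Na_i(x)\partial_x^i$ ($\deg a_i\le i$, $a_0\equiv0$) with eigenvalues $\lambda_n$, $\lambda_0=0$, $\lambda_n\notin\{0,\lambda_1,\dots,\lambda_{n-1}\}$. *)

(* Defs.v *)
From HB Require Import structures.
From mathcomp Require Import all_boot all_order all_algebra.
From mathcomp Require Import complex.
From mathcomp Require Import Rstruct.
Set Implicit Arguments. Unset Strict Implicit. Unset Printing Implicit Defensive.
Import Order.TTheory GRing.Theory Num.Theory.
Local Open Scope ring_scope.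

Definition C : Type := (Rdefinitions.R)[i].

Definition P1 (P : nat -> {poly C}) (gamma : nat -> C) (n : nat) : {poly C} :=
  if n is m.+1 then P n + gamma n *: P m else P 0%N.

(* Delta_{k,n,s}(Q): k x k determinant; with 0-based row i (rho = i+1) and
   column j (c = j+1):
   row 0:  [C(n-k,s-1)+...+C(n-k+c-1,s-1)] q_{n-k+c, n-k}
   row i>=1: q_{n-k+c, n-k+rho-1}.  Here q_{m,l} = (Q m)`_l. *)
Definition Delta (Q : nat -> {poly C}) (k n s : nat) : C :=
  \det (\matrix_(i < k, j < k)
          (if i == 0%N :> nat then
             (\sum_(0 <= l < j.+1) ('C(n - k + l, s - 1))%:R)
               * (Q (n - k + j.+1)%N)`_(n - k)
           else (Q (n - k + j.+1)%N)`_(n - k + i))).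

(* E_{k,n,t}: (k-t-1) x (k-t-1) determinant with (rho,c) entry
   b_{n-k+t+1+c, n-k+t+rho}; for t = k-1 this is the empty determinant 1. *)
Definition Emat (P : nat -> {poly C}) (k n t : nat) : C :=
  \det (\matrix_(i < k - t - 1, j < k - t - 1)
          (P (n - k + t + 1 + j.+1)%N)`_(n - k + t + i.+1)).

(* Main.v *)
Require Import Defs.
From HB Require Import structures.
From mathcomp Require Import all_boot all_order all_algebra.
From mathcomp Require Import complex.
From mathcomp Require Import Rstruct.
From mathcomp Require Import ring zify.
Set Implicit Arguments. Unset Strict Implicit.
Import Order.TTheory GRing.Theory Num.Theory.
Local Open Scope ring_scope.

Lemma minor_tri (R : comNzRingType) (l q N : nat) (F : nat -> nat -> R) :
  N = (l + q)%N ->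
  (forall i j, (j < l)%N -> (j <= i)%N -> F i j = (i == j)%:R) ->
  \det (\matrix_(i < N, j < N) F i j) = \det (\matrix_(i < q, j < q) F (i + l)%N (j + l)%N).
Proof.
move=> ->; elim: l F => [|l IH] F hF.
  by congr (\det _); apply/matrixP => i j; rewrite !mxE !addn0.
change (l.+1 + q)%N with (l + q).+1.
rewrite (expand_det_col _ ord0) big_ord_recl big1 ?addr0 => [|i _]; last first.
  by rewrite mxE hF //= mul0r.
rewrite mxE hF //= mul1r /cofactor /= expr0 mul1r.
have -> : row' ord0 (col' ord0 (\matrix_(i < (l+q).+1, j < (l+q).+1) F i j)) = \matrix_(i < l + q, j < l+q) F i.+1 j.+1.
  by apply/matrixP => i j; rewrite !mxE.
rewrite (IH (fun i j => F i.+1 j.+1)); last by move=> i j hj hji; rewrite hF.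
by congr (\det _); apply/matrixP => i j; rewrite !mxE !addnS.
Qed.

Definition Vf (R : comNzRingType) (g : nat -> R) (j l : nat) : R :=
  if (j <= l)%N then (-1) ^+ (l - j) * \prod_(j <= u < l) g u.+1 else 0.

Definition Uf (R : comNzRingType) (g : nat -> R) (i l : nat) : R :=
  (i == l)%:R + (i.+1 == l)%:R * g l.

Lemma sparse (R : comNzRingType) (g : nat -> R) (k l : nat) (f : nat -> R) :
  (l < k)%N ->
  \sum_(j < k) f j * Uf g j l = f l + (if l is l'.+1 then f l' * g l else 0).
Proof.
move=> hl; rewrite /Uf.
under eq_bigr do rewrite mulrDr.
rewrite big_split /=; congr (_ + _).
  rewrite (bigD1 (Ordinal hl)) //= eqxx mulr1 big1 ?addr0 // => i hi.
  have -> : (nat_of_ord i == l) = false.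
    by apply/negbTE; apply: contra hi => /eqP h; apply/eqP/val_inj.
  by rewrite mulr0.
case: l hl => [|l] hl.
  by rewrite big1 // => i _; rewrite mul0r mulr0.
have hl' : (l < k)%N by apply: ltnW.
rewrite (bigD1 (Ordinal hl')) //= eqxx mul1r big1 ?addr0 // => i hi.
have : (i.+1 == l.+1) = false.
  by rewrite eqSS; apply/negbTE; apply: contra hi => /eqP h; apply/eqP/val_inj.
by move=> ->; rewrite mul0r mulr0.
Qed.

Lemma VU (R : comNzRingType) (g : nat -> R) (k j l : nat) :
  (l < k)%N -> \sum_(i < k) Vf g j i * Uf g i l = (j == l)%:R.
Proof.
move=> hl; rewrite (sparse _ (fun i => Vf g j i) hl).
case: l hl => [|l] hl.
  rewrite addr0 /Vf; case: j => [|j] //=.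
  by rewrite subnn expr0 big_geq // mulr1.
rewrite /Vf.
case: (ltngtP j l.+1) => hj.
- have hj' : (j <= l)%N by [].
  rewrite hj' big_nat_recr //= subSn // exprS.
  by rewrite -mulrA mulN1r mulrA addNr.
- have -> : (j <= l)%N = false by apply/negbTE; rewrite -ltnNge ltnW.
  by rewrite mul0r addr0.
- subst j; by rewrite ltnn subnn expr0 big_geq // mulr1 mul0r addr0.
Qed.

Lemma key (R : comNzRingType) (k : nat) (hk : (0 < k)%N) (A : nat -> nat -> R) (g w : nat -> R) :
  \det (\matrix_(i < k, j < k)
     (A i j + (if nat_of_ord j is j'.+1 then g j * A i j' else 0) + (nat_of_ord i == 0%N)%:R * w j))
  = \det (\matrix_(i < k, j < k) A i j) +
    \sum_(l < k) (\sum_(j < k) w j * Vf g j l) *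
       cofactor (\matrix_(i < k, j < k) A i j) (Ordinal hk) l.
Proof.
pose B := \matrix_(i < k, l < k)
   (A i l + (nat_of_ord i == 0%N)%:R * \sum_(j < k) w j * Vf g j l).
pose U := \matrix_(i < k, l < k) Uf g i l.
have hU : \det U = 1.
  rewrite -det_tr det_trig; last first.
    apply/is_trig_mxP => i j hij; rewrite /U !mxE /Uf.
    have -> : (nat_of_ord j == i) = false by apply/negbTE; rewrite neq_ltn hij orbT.
    have -> : (j.+1 == i) = false by apply/negbTE; rewrite neq_ltn ltnS (ltnW hij) orbT.
    by rewrite mul0r addr0.
  apply: big1 => i _; rewrite /U !mxE /Uf eqxx.
  have -> : (i.+1 == i) = false by rewrite gtn_eqF.
  by rewrite mul0r addr0.
have hBU : \matrix_(i < k, j < k)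
     (A i j + (if nat_of_ord j is j'.+1 then g j * A i j' else 0) + (nat_of_ord i == 0%N)%:R * w j)
     = B *m U.
  apply/matrixP => i l; rewrite !mxE.
  rewrite (eq_bigr (fun j : 'I_k => (A i j + (nat_of_ord i == 0%N)%:R * \sum_(j0 < k) w j0 * Vf g j0 j) * Uf g j l)); last by move=> j _; rewrite !mxE.
  rewrite (sparse g (fun j => A i j + (nat_of_ord i == 0%N)%:R * \sum_(j0 < k) w j0 * Vf g j0 j) (ltn_ord l)).
  have hw : w l = \sum_(j0 < k) w j0 * Vf g j0 l +
     (if nat_of_ord l is l'.+1 then (\sum_(j0 < k) w j0 * Vf g j0 l') * g l else 0).
    have -> : w l = \sum_(j0 < k) w j0 * (j0 == l :> nat)%:R.
      rewrite (bigD1 l) //= eqxx mulr1 big1 ?addr0 // => j hj.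
      by rewrite (_ : (nat_of_ord j == l) = false) ?mulr0 //; apply/negbTE; apply: contra hj => /eqP h; apply/eqP/val_inj.
    under [in LHS]eq_bigr => j _ do rewrite -(VU g j (ltn_ord l)) (sparse g (fun i => Vf g j i) (ltn_ord l)).
    case: (nat_of_ord l) => [|l'] /=.
      by rewrite addr0; apply: eq_bigr => j _; rewrite addr0.
    rewrite mulr_suml -big_split /=; apply: eq_bigr => j _; rewrite mulrDr mulrA //.
  rewrite hw; case: (nat_of_ord l) => [|l'] /=; first by rewrite !addr0.
  rewrite mulrDl; ring.
rewrite hBU det_mulmx hU mulr1 (expand_det_row _ (Ordinal hk)).
rewrite [in RHS](expand_det_row _ (Ordinal hk)) -big_split /=.
apply: eq_bigr => l _.
have -> : cofactor B (Ordinal hk) l = cofactor (\matrix_(i < k, j < k) A i j) (Ordinal hk) l.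
  rewrite /cofactor; congr (_ * \det _); apply/matrixP => i j; rewrite !mxE /=.
  by rewrite /bump /= add1n /= mul0r addr0.
by rewrite !mxE /= mul1r mulrDl.
Qed.

Lemma coef_hi (P : nat -> {poly C}) (hdeg : forall m, size (P m) = m.+1) m i :
  (m < i)%N -> (P m)`_i = 0.
Proof. by move=> h; rewrite nth_default // hdeg. Qed.

Lemma coef_top (P : nat -> {poly C}) (hmonic : forall m, P m \is monic)
  (hdeg : forall m, size (P m) = m.+1) m : (P m)`_m = 1.
Proof. by have := monicP (hmonic m); rewrite /lead_coef hdeg. Qed.

Lemma step1 (P : nat -> {poly C}) (gamma : nat -> C)
  (hdeg : forall m, size (P m) = m.+1) (k n s : nat) :
  let m := (n - k)%N in
  let S := fun j => \sum_(0 <= l < j.+1) ('C(m + l, s - 1))%:R : C in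
  let A := fun i j => if i == 0%N then S j * (P (m + j.+1)%N)`_m else (P (m + j.+1)%N)`_(m + i) in
  Delta (P1 P gamma) k n s =
  \det (\matrix_(i < k, j < k)
     (A i j + (if nat_of_ord j is j'.+1 then gamma (m + j.+1)%N * A i j' else 0)
       + (nat_of_ord i == 0%N)%:R * (gamma (m + j.+1)%N * ('C(m + j, s-1))%:R * (P (m+j)%N)`_m))).
Proof.
move=> m S A; rewrite /Delta; congr (\det _); apply/matrixP => i j; rewrite !mxE.
rewrite -/m /A /S.
case: (nat_of_ord i) => [|i']; case: (nat_of_ord j) => [|j'] /=; rewrite ?addnS /= ?coefD ?coefZ.
- rewrite big_nat1 addn0; ring.
- rewrite big_nat_recr //= -addnS; ring.
- rewrite (@coef_hi P hdeg (m + 0)%N (m + i').+1); last by rewrite ltnS addn0 leq_addr.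
  by rewrite !mul0r !addr0 mulr0 addr0.
- by rewrite mul0r !addr0.
Qed.

Definition Sf (k n s : nat) (j : nat) : C :=
  \sum_(0 <= l < j.+1) ('C((n - k) + l, s - 1))%:R.
Definition Af (P : nat -> {poly C}) (k n s : nat) (i j : nat) : C :=
  if i == 0%N then Sf k n s j * (P ((n - k) + j.+1)%N)`_(n - k)
  else (P ((n - k) + j.+1)%N)`_((n - k) + i).

Lemma step2 (P : nat -> {poly C}) (hmonic : forall m, P m \is monic)
  (hdeg : forall m, size (P m) = m.+1) (k n s : nat) (hk : (0 < k)%N) (l : 'I_k) :
  cofactor (\matrix_(i < k, j < k) Af P k n s i j) (Ordinal hk) l = (-1) ^+ l * Emat P k n l.
Proof.
rewrite /cofactor /= add0n; congr (_ * _).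
set m := (n - k)%N.
have -> : row' (Ordinal hk) (col' l (\matrix_(i < k, j < k) Af P k n s i j)) =
   \matrix_(i < k.-1, j < k.-1) (P (m + (bump l j).+1)%N)`_(m + i.+1) .
  by apply/matrixP => i j; rewrite !mxE /Af /=.
rewrite (@minor_tri _ l (k - l - 1) k.-1 (fun i j => (P (m + (bump l j).+1)%N)`_(m + i.+1))); last 2 first.
- have := ltn_ord l; lia.
- move=> i j hjl hji; rewrite /bump (_ : (l <= j)%N = false) /=; last first.
    by apply/negbTE; rewrite -ltnNge.
  rewrite add0n; case: eqP => [->|hne]; first by rewrite addnS (coef_top hmonic hdeg).
  rewrite (coef_hi hdeg) //; lia.
rewrite /Emat; congr (\det _); apply/matrixP => i j; rewrite !mxE.
rewrite /bump (_ : (l <= j + l)%N = true); last by rewrite leq_addl.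
congr ((P _)`_ _); lia.
Qed.

Lemma sign_sq (r : nat) : ((-1) ^+ r * (-1) ^+ r : C) = 1.
Proof. by rewrite -exprMn mulN1r opprK expr1n. Qed.

Theorem lemma4 (P : nat -> {poly C}) (gamma : nat -> C)
  (hmonic : forall m, P m \is monic)
  (hdeg : forall m, size (P m) = m.+1)
  (hgamma : forall m, (1 <= m)%N -> gamma m != 0)
  (n k s : nat) (hn : (1 <= n)%N) (hk1 : (1 <= k)%N) (hkn : (k <= n)%N)
  (hs : (1 <= s)%N) :
  Delta (P1 P gamma) k n s =
  Delta P k n s +
  \sum_(0 <= j < k)
     (-1) ^+ j * ('C(n - k + j, s - 1))%:R * (P (n - k + j)%N)`_(n - k) *
     (\sum_(1 <= r < (k - j).+1)
        (\prod_(1 <= u < r.+1) gamma (n - k + j + u)%N) *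
        Emat P k n (j + r - 1)).
Proof.
set m := (n - k)%N.
pose g := fun j => gamma (m + j.+1)%N.
pose w := fun j => gamma (m + j.+1)%N * ('C(m + j, s-1))%:R * (P (m+j)%N)`_m.
have E1 : Delta (P1 P gamma) k n s =
  \det (\matrix_(i < k, j < k)
     (Af P k n s i j + (if nat_of_ord j is j'.+1 then g j * Af P k n s i j' else 0)
       + (nat_of_ord i == 0%N)%:R * w j)) := @step1 P gamma hdeg k n s.
have E0 : Delta P k n s = \det (\matrix_(i < k, j < k) Af P k n s i j) by [].
rewrite E1 E0 (key hk1 (Af P k n s) g w); congr (_ + _).
under eq_bigr do rewrite (@step2 P hmonic hdeg k n s hk1).
rewrite big_mkord.
under eq_bigr do rewrite mulr_suml.
rewrite exchange_big /=; apply: eq_bigr => j _.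
rewrite -(big_mkord xpredT (fun l => w j * Vf g j l * ((-1) ^+ l * Emat P k n l))).
rewrite (big_cat_nat (n:=j)) //=; last exact: ltnW.
rewrite big_nat_cond big1 ?add0r; last first.
  move=> l /andP [/andP [_ hl] _]; rewrite /Vf leqNgt hl /= mulr0 mul0r //.
rewrite -{1}(add0n j) big_addn big_add1 /= mulr_sumr.
apply: eq_bigr => r _.
rewrite /Vf leq_addl addnK /w.
have -> : \prod_(j <= u < r + j) g u.+1 = \prod_(0 <= i < r) gamma (m + j + i.+2)%N.
  rewrite -{1}(add0n j) big_addn addnK.
  by apply: eq_bigr => i _; rewrite /g; congr (gamma _); lia.
rewrite big_nat_recl // big_add1 /=.
have -> : (j + r.+1 - 1 = r + j)%N by lia.
have -> : (m + j + 1 = m + j.+1)%N by lia.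
rewrite exprD.
have h := sign_sq r; set e := (-1) ^+ r in h *.
have H : forall x : C, x = e * e * x by move=> x; rewrite h mul1r.
rewrite [RHS]H; ring.
Qed.
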